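(* Let $\mathcal{M}$ be a finite model of the simply typed $\lambda$-calculus, let $\tau$ be a type and $\alpha=\omega_\tau$. For every $c\in\mathcal{M}_{\omega_\tau}$, the function $h:\mathbb{N}^3\to\mathbb{N}$ given by $h(m,n_1,n_2)=n_1$ if $[\![\rho(m)^{\alpha}]\!]_{\mathcal{M}}=c$ and $h(m,n_1,n_2)=n_2$ otherwise, is strictly definable.
   Context: We work in the simply typed $\lambda$-calculus (type assignment to untyped $\lambda$-terms) with a single base type $o$. For a type $\tau$, $\omega_\tau=(\tau\to\tau)\to\tau\to\tau$. The Church numeral of $n$ is $\rho(n)=\lambda f x.f^{n}x$, and $\rho(n)^{\alpha}$ denotes it typed with type $\alpha$. A finite model $\mathcal{M}$ assigns to each type $\sigma$ a finite set $\mathcal{M}_\sigma$ (e.g. the full set-theoretic type hierarchy over a finite base set), and $[\![M]\!]_{\mathcal{M}}\in\mathcal{M}_\sigma$ denotes the interpretation of a closed term $M$ of type $\sigma$. A function $f:\mathbb{N}^k\to\mathbb{N}$ is strictly definable if there exist a type $\sigma$ and a term $E$ with $\vdash E:\omega_\sigma\to\cdots\to\omega_\sigma\to\omega_\sigma$ ($k$ arguments) such that $E\,\rho(n_1)\cdots\rho(n_k)=_{\beta\eta}\rho(f(n_1,\dots,n_k))$ for all $n_1,\dots,n_k$. *)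

(* Defs.v *)
From Stdlib Require Import Relations.
From mathcomp Require Import all_boot.

Set Implicit Arguments.
Unset Strict Implicit.
Unset Printing Implicit Defensive.

Inductive ty : Type := O | Arr of ty & ty.

Definition omega (t : ty) : ty := Arr (Arr t t) (Arr t t).

(** * Untyped lambda terms (de Bruijn indices) *)
Inductive tm : Type := Var of nat | App of tm & tm | Lam of tm.

Fixpoint lift (d k : nat) (t : tm) : tm :=
  match t with
  | Var n => if k <= n then Var (n + d) else Var n
  | App t1 t2 => App (lift d k t1) (lift d k t2)
  | Lam t1 => Lam (lift d k.+1 t1)
  end.

Fixpoint subst (k : nat) (u : tm) (t : tm) : tm :=
  match t with
  | Var n => if n < k then Var n else if n == k then lift k 0 u else Var n.-1
  | App t1 t2 => App (subst k u t1) (subst k u t2)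
  | Lam t1 => Lam (subst k.+1 u t1)
  end.

Inductive step : tm -> tm -> Prop :=
  | step_beta t u : step (App (Lam t) u) (subst 0 u t)
  | step_eta t : step (Lam (App (lift 1 0 t) (Var 0))) t
  | step_appl t t' u : step t t' -> step (App t u) (App t' u)
  | step_appr t u u' : step u u' -> step (App t u) (App t u')
  | step_lam t t' : step t t' -> step (Lam t) (Lam t').

Definition betaeta : tm -> tm -> Prop := clos_refl_sym_trans tm step.

Definition church (n : nat) : tm := Lam (Lam (iter n (App (Var 1)) (Var 0))).

Inductive typing : seq ty -> tm -> ty -> Prop :=
  | ty_var G n : n < size G -> typing G (Var n) (nth O G n)
  | ty_app G t u a b : typing G t (Arr a b) -> typing G u a -> typing G (App t u) b
  | ty_lam G t a b : typing (a :: G) t b -> typing G (Lam t) (Arr a b).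

Definition arrows (k : nat) (s : ty) : ty := iter k (Arr (omega s)) (omega s).
Definition apps (E : tm) (ns : seq nat) : tm := foldl (fun t n => App t (church n)) E ns.

Definition strictly_definable (k : nat) (f : seq nat -> nat) : Prop :=
  exists (s : ty) (E : tm), typing [::] E (arrows k s) /\
    forall ns : seq nat, size ns = k -> betaeta (apps E ns) (church (f ns)).

(** * Finite models: extensional typed combinatory algebras (Henkin models)
    whose domains are finite. *)
Record model := Model {
  dom : ty -> finType;
  app : forall a b, dom (Arr a b) -> dom a -> dom b;
  app_ext : forall a b (f g : dom (Arr a b)), (forall x, app f x = app g x) -> f = g;
  combK : forall a b, dom (Arr a (Arr b a));
  combK_spec : forall a b (x : dom a) (y : dom b), app (app (combK a b) x) y = x;
  combS : forall a b c, dom (Arr (Arr a (Arr b c)) (Arr (Arr a b) (Arr a c)));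
  combS_spec : forall a b c (x : dom (Arr a (Arr b c))) (y : dom (Arr a b)) (z : dom a),
      app (app (app (combS a b c) x) y) z = app (app x z) (app y z)
}.

Definition env (M : model) (G : seq ty) := forall n, n < size G -> dom M (nth O G n).

Definition env_cons (M : model) (G : seq ty) (a : ty) (x : dom M a) (r : env M G)
  : env M (a :: G) :=
  fun n => match n return n < size (a :: G) -> dom M (nth O (a :: G) n) with
           | 0 => fun _ => x
           | k.+1 => fun h => r k h
           end.

Definition env_nil (M : model) : env M [::] := fun n (h : n < 0) => False_rect _ (notF h).

Inductive denotes (M : model) : forall G, tm -> forall a, env M G -> dom M a -> Prop :=
  | den_var G n (h : n < size G) (r : env M G) :
      denotes (Var n) r (r n h)
  | den_app G t u a b (r : env M G) (f : dom M (Arr a b)) (x : dom M a) :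
      denotes t r f -> denotes u r x -> denotes (App t u) r (app f x)
  | den_lam G t a b (r : env M G) (f : dom M (Arr a b)) :
      (forall x : dom M a, denotes t (env_cons x r) (app f x)) ->
      denotes (Lam t) r f.

Definition interp_eq (M : model) (t : tm) (a : ty) (d : dom M a) : Prop :=
  @denotes M [::] t a (env_nil M) d.

(* Main.v *)
Require Import Defs.
From Stdlib Require Import Relations Eqdep Program.Equality Lia.
From mathcomp Require Import all_boot zify.
Import Defs.
Set Implicit Arguments.
Unset Strict Implicit.
Unset Printing Implicit Defensive.
Definition red := clos_refl_trans tm step.
Definition Lams n t := iter n Lam t.
Definition Apps t us := foldl App t us.

Fixpoint wf (k : nat) (t : tm) : bool :=
  match t with Var n => n < k | App a b => wf k a && wf k b | Lam a => wf k.+1 a end.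

Lemma lift0 t k : lift 0 k t = t.
Proof.
elim: t k => [n|a IHa b IHb|a IH] k /=; last by rewrite IH.
  by case: ifP; rewrite ?addn0.
by rewrite IHa IHb.
Qed.

Lemma subst_lift v u c d k : c <= k <= c + d -> subst k v (lift d.+1 c u) = lift d c u.
Proof.
elim: u c k => [n|a IHa b IHb|a IH] c k /= /andP[ck kc].
- case: (leqP c n) => cn /=.
  + have -> : n + d.+1 < k = false by apply/negbTE; lia.
    have -> : (n + d.+1 == k) = false by apply/negbTE; lia.
    by rewrite addnS.
  + by rewrite (leq_trans cn ck).
- by rewrite IHa ?ck ?kc // IHb ?ck ?kc.
- by rewrite IH //= ltnS ck addSn ltnS.
Qed.

Lemma lift_lift t d e c : lift d c (lift e c t) = lift (e + d) c t.
Proof.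
elim: t c => [n|a IHa b IHb|a IH] c /=.
- case: (leqP c n) => cn /=; first by rewrite (leq_trans cn (leq_addr _ _)) addnA.
  by rewrite leqNgt cn.
- by rewrite IHa IHb.
- by rewrite IH.
Qed.

Lemma lift_wf k t d c : wf k t -> k <= c -> lift d c t = t.
Proof.
elim: t k c => [n|a IHa b IHb|a IH] k c /=.
- by move=> nk kc; rewrite leqNgt (leq_trans nk kc).
- by move=> /andP[wa wb] kc; rewrite (IHa k) // (IHb k).
- by move=> wa kc; rewrite (IH k.+1).
Qed.

Lemma subst_wf k t u c : wf k t -> k <= c -> subst c u t = t.
Proof.
elim: t k c => [n|a IHa b IHb|a IH] k c /=.
- by move=> nk kc; rewrite (leq_trans nk kc).
- by move=> /andP[wa wb] kc; rewrite (IHa k) // (IHb k).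
- by move=> wa kc; rewrite (IH k.+1).
Qed.

Lemma wf_Lams n k t : wf k (Lams n t) = wf (n + k) t.
Proof. by elim: n k => [|n IH] k //=; rewrite IH addnS. Qed.

Lemma wf_Apps k t us : wf k (Apps t us) = wf k t && all (wf k) us.
Proof. elim: us t => [|u us IH] t /=; first by rewrite andbT. by rewrite IH /= andbA. Qed.

Lemma subst_Lams n k u t : subst k u (Lams n t) = Lams n (subst (n + k) u t).
Proof. by elim: n k => [|n IH] k //=; rewrite IH addnS. Qed.

Lemma subst_Apps k u t us : subst k u (Apps t us) = Apps (subst k u t) (map (subst k u) us).
Proof. by elim: us t => [|v us IH] t //=; rewrite IH. Qed.

Lemma lift_Apps d k t us : lift d k (Apps t us) = Apps (lift d k t) (map (lift d k) us).
Proof. by elim: us t => [|v us IH] t //=; rewrite IH. Qed.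

Lemma lift_iter d c n F X : lift d c (iter n (App F) X) = iter n (App (lift d c F)) (lift d c X).
Proof. by elim: n => //= n ->. Qed.

Lemma subst_iter k u n F X : subst k u (iter n (App F) X) = iter n (App (subst k u F)) (subst k u X).
Proof. by elim: n => //= n ->. Qed.

Lemma red_ctx (F : tm -> tm) : (forall a b, step a b -> step (F a) (F b)) ->
  forall a b, red a b -> red (F a) (F b).
Proof.
move=> HF a b H; induction H as [x y s|x|x y z _ IH1 _ IH2].
- exact/rt_step/HF.
- exact: rt_refl.
- exact: rt_trans IH1 IH2.
Qed.

Lemma red_appl u a b : red a b -> red (App a u) (App b u).
Proof. apply: (red_ctx (F := fun x => App x u)) => ?? s; exact: step_appl. Qed.
Lemma red_appr u a b : red a b -> red (App u a) (App u b).
Proof. apply: (red_ctx (F := fun x => App u x)) => ?? s; exact: step_appr. Qed.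
Lemma red_lam a b : red a b -> red (Lam a) (Lam b).
Proof. apply: (red_ctx (F := Lam)) => ?? s; exact: step_lam. Qed.
Lemma red_Lams n a b : red a b -> red (Lams n a) (Lams n b).
Proof. elim: n => //= n IH H; exact/red_lam/IH. Qed.
Lemma red_Apps us a b : red a b -> red (Apps a us) (Apps b us).
Proof. elim: us a b => //= u us IH a b H; exact/IH/red_appl. Qed.
Lemma red_trans a b c : red a b -> red b c -> red a c.
Proof. exact: rt_trans. Qed.
Lemma red_beta t u : red (App (Lam t) u) (subst 0 u t).
Proof. exact/rt_step/step_beta. Qed.

Lemma red_betaeta a b : red a b -> betaeta a b.
Proof.
move=> H; induction H as [x y s|x|x y z _ IH1 _ IH2].
- exact: rst_step.
- exact: rst_refl.
- exact: rst_trans IH1 IH2.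
Qed.

Lemma red_church n F X : red (App (App (church n) F) X) (iter n (App F) X).
Proof.
apply: red_trans; first exact/red_appl/red_beta.
rewrite /= subst_iter /=.
apply: red_trans; first exact: red_beta.
rewrite subst_iter /= (@subst_lift X F 0 0 0) // !lift0.
exact: rt_refl.
Qed.

Lemma subst_var_lt k u n : n < k -> subst k u (Var n) = Var n.
Proof. by move=> /= ->. Qed.
Lemma subst_var_eq k u : subst k u (Var k) = lift k 0 u.
Proof. by rewrite /= ltnn eqxx. Qed.

Lemma map_subst_wf k k' u us : all (wf k) us -> k <= k' -> map (subst k' u) us = us.
Proof.
elim: us => //= v us IH /andP[wv wus] kk.
by rewrite (subst_wf _ wv kk) IH.
Qed.

Lemma red_drop K us u : size us = K -> red (Apps (Lams K (lift K 0 u)) us) u.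
Proof.
elim: K us => [|K IH] [|v us] //= Hs.
  rewrite lift0; exact: rt_refl.
apply: red_trans; first exact/red_Apps/red_beta.
rewrite subst_Lams addn0 (@subst_lift v u 0 K K) ?leq0n ?leqnn //.
by apply: IH; case: Hs.
Qed.

Lemma red_select K us i : size us = K -> i < K ->
  red (Apps (Lams K (Var (K.-1 - i))) us) (nth (Var 0) us i).
Proof.
elim: K us i => [|K IH] [|u us] i //= Hs Hi.
apply: red_trans; first exact/red_Apps/red_beta.
rewrite subst_Lams addn0.
case: i Hi => [|i] Hi.
  rewrite subn0 subst_var_eq; apply: red_drop; by case: Hs.
rewrite subst_var_lt; last by lia.
rewrite [nth _ _ _]/=.
have -> : K - i.+1 = K.-1 - i by lia.
by apply: IH; [case: Hs | lia].
Qed.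

Fixpoint vars K := if K is K'.+1 then rcons (map (lift 1 0) (vars K')) (Var 0) else [::].

Definition isvar K (u : tm) := if u is Var j then j < K else false.

Lemma vars_all K : all (isvar K) (vars K).
Proof.
elim: K => //= K IH.
rewrite all_rcons all_map /=.
apply: sub_all IH => -[] //= j; by rewrite addn1.
Qed.

Lemma size_vars K : size (vars K) = K.
Proof. by elim: K => //= K IH; rewrite size_rcons size_map IH. Qed.

Lemma all_isvar_wf K us : all (isvar K) us -> all (wf K) us.
Proof. by apply: sub_all => -[]. Qed.

Lemma red_eta K t : red (Lams K (Apps (lift K 0 t) (vars K))) t.
Proof.
elim: K => [|K IH]; first by rewrite /= lift0; exact: rt_refl.
rewrite /Lams iterSr [vars _]/= /Apps foldl_rcons -/(Apps _ _).
rewrite -addn1 -lift_lift -lift_Apps -/(Lams _ _).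
apply: red_trans IH.
apply: red_Lams; apply: rt_step; exact: step_eta.
Qed.

Lemma typing_weaken G t a G' : typing G t a -> typing (G ++ G') t a.
Proof.
elim => {G t a} [G n Hn|G t u a b _ IH1 _ IH2|G t a b _ IH].
- have -> : nth O G n = nth O (G ++ G') n by rewrite nth_cat Hn.
  apply: ty_var; rewrite size_cat; exact: leq_trans Hn (leq_addr _ _).
- exact: ty_app IH1 IH2.
- exact: ty_lam IH.
Qed.

Lemma ty_var' G n a : n < size G -> nth O G n = a -> typing G (Var n) a.
Proof. by move=> H <-; exact: ty_var. Qed.

Lemma nseq_consO K G : nseq K O ++ O :: G = O :: nseq K O ++ G.
Proof. by elim: K => //= K ->. Qed.

Lemma typing_Lams K G t b : typing (nseq K O ++ G) t b -> typing G (Lams K t) (iter K (Arr O) b).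
Proof.
elim: K G => [|K IH] G //= H.
apply: ty_lam; apply: IH; by rewrite nseq_consO.
Qed.

Lemma typing_Apps G t us b (P : pred tm) : all P us -> (forall u, P u -> typing G u O) ->
  typing G t (iter (size us) (Arr O) b) -> typing G (Apps t us) b.
Proof.
elim: us t => [|u us IH] t //= /andP[Pu Pus] HP Ht.
apply: IH => //; exact: ty_app Ht (HP _ Pu).
Qed.

Lemma nth_nseq_cat K l j : nth O (nseq K O ++ l) (j + K) = nth O l j.
Proof. by rewrite nth_cat size_nseq ltnNge leq_addl /= addnK. Qed.

Lemma nth_nseq_lt K l j : j < K -> nth O (nseq K O ++ l) j = O.
Proof. by move=> H; rewrite nth_cat size_nseq H nth_nseq H. Qed.

Lemma isvar_typing K l u : isvar K u -> typing (nseq K O ++ l) u O.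
Proof.
case: u => //= j H; apply: ty_var'; first by rewrite size_cat size_nseq; exact: leq_trans H (leq_addr _ _).
exact: nth_nseq_lt.
Qed.

Lemma wf_mono k k' t : wf k t -> k <= k' -> wf k' t.
Proof.
elim: t k k' => [n|a IHa b IHb|a IH] k k' /=.
- move=> H1 H2; exact: leq_trans H1 H2.
- by move=> /andP[wa wb] kk; rewrite (IHa k) // (IHb k).
- by move=> wa kk; rewrite (IH k.+1).
Qed.

Lemma typing_Apps_iota G t f b s K : (forall j, s <= j < s + K -> typing G (f j) O) ->
  typing G t (iter K (Arr O) b) -> typing G (Apps t (map f (iota s K))) b.
Proof.
elim: K s t => [|K IH] s t //= Hf Ht.
apply: IH.
  move=> j /andP[h1 h2]; apply: Hf; apply/andP; split; lia.
apply: ty_app Ht _; apply: Hf; apply/andP; split; lia.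
Qed.

Section Cons.
Variables (K : nat) (delta : nat -> nat) (i0 : nat) (acc : nat -> bool).
Hypothesis K_gt0 : 0 < K.

Definition sT := iter K (Arr O) O.
Definition WT := omega sT.
Definition Pst i := Lams K (Var (K.-1 - i)).
Definition ds := map (fun j => Var (K.-1 - delta j)) (iota 0 K).
Definition Dt := Lam (Lams K (Apps (Var K) ds)).
Definition aj N1 N2 j := Apps (App (App (if acc j then N1 else N2) (Var K.+1)) (Var K)) (vars K).
Definition BODY Mt N1 N2 := Apps (App (App Mt Dt) (Pst i0)) (map (aj N1 N2) (iota 0 K)).
Definition Et := Lams K.+4.+1 (BODY (Var K.+4) (Var K.+3) (Var K.+2)).

Lemma wf_P i : wf 0 (Pst i).
Proof. rewrite /Pst wf_Lams /=; lia. Qed.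

Lemma ds_all : all (wf K) ds.
Proof. rewrite /ds all_map; apply/allP => j _ /=; lia. Qed.

Lemma wf_D : wf 0 Dt.
Proof.
rewrite /Dt /= wf_Lams wf_Apps /= addn1 ltnSn /=.
apply: sub_all ds_all => u wu; exact: wf_mono wu (leqnSn _).
Qed.

Hypothesis delta_lt : forall j, j < K -> delta j < K.

Lemma D_step i : i < K -> red (App Dt (Pst i)) (Pst (delta i)).
Proof.
move=> Hi; apply: red_trans; first exact: red_beta.
rewrite subst_Lams subst_Apps addn0 subst_var_eq (lift_wf _ (wf_P i)) //.
rewrite (map_subst_wf _ ds_all) //.
apply: red_Lams.
have -> : Var (K.-1 - delta i) = nth (Var 0) ds i.
  by rewrite /ds (nth_map 0) ?size_iota // nth_iota.
apply: red_select => //; by rewrite /ds size_map size_iota.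
Qed.

Lemma iter_delta_lt m i : i < K -> iter m delta i < K.
Proof. elim: m => //= m IH Hi; exact/delta_lt/IH. Qed.

Lemma iter_D m i : i < K -> red (iter m (App Dt) (Pst i)) (Pst (iter m delta i)).
Proof.
move=> Hi; elim: m => [|m IH] /=; first exact: rt_refl.
apply: red_trans; first exact: red_appr IH.
exact/D_step/iter_delta_lt.
Qed.

Arguments Dt : simpl never.
Arguments Pst : simpl never.

Lemma subst_BODY k u Mt N1 N2 : K.+2 <= k ->
  subst k u (BODY Mt N1 N2) = BODY (subst k u Mt) (subst k u N1) (subst k u N2).
Proof.
move=> Hk; rewrite /BODY subst_Apps.
change (subst k u (App (App Mt Dt) (Pst i0))) with (App (App (subst k u Mt) (subst k u Dt)) (subst k u (Pst i0))).
rewrite (subst_wf _ wf_D) // (subst_wf _ (wf_P i0)) //.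
congr Apps; rewrite -map_comp; apply: eq_map => j /=.
rewrite /aj subst_Apps (map_subst_wf (k := K)) ?(all_isvar_wf (vars_all K)) //; last by lia.
have h1 : K.+1 < k by lia. have h2 : K < k by lia.
by case: (acc j) => /=; rewrite h1 h2.
Qed.

Lemma wf0_church n : wf 0 (church n).
Proof. rewrite /church /=; by elim: n => //= n ->. Qed.

Lemma church_lift n d c : lift d c (church n) = church n.
Proof. exact: lift_wf (wf0_church n) (leq0n c). Qed.
Lemma church_subst n k u : subst k u (church n) = church n.
Proof. exact: subst_wf (wf0_church n) (leq0n k). Qed.

Lemma red_main m n1 n2 : i0 < K ->
  red (apps Et [:: m; n1; n2]) (church (if acc (iter m delta i0) then n1 else n2)).
Proof.
move=> Hi0.
change (apps Et [:: m; n1; n2]) with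
  (App (App (App (Lam (Lams K.+4 (BODY (Var K.+4) (Var K.+3) (Var K.+2)))) (church m)) (church n1)) (church n2)).
apply: red_trans; first exact/red_appl/red_appl/red_beta.
rewrite subst_Lams addn0 subst_BODY; last by lia.
rewrite (subst_var_eq K.+4 (church m)) church_lift.
rewrite (@subst_var_lt K.+4 _ K.+3) // (@subst_var_lt K.+4 _ K.+2) //.
change (Lams K.+4 ?X) with (Lam (Lams K.+3 X)).
apply: red_trans; first exact/red_appl/red_beta.
rewrite subst_Lams addn0 subst_BODY; last by lia.
rewrite (subst_var_eq K.+3 (church n1)) church_lift church_subst.
rewrite (@subst_var_lt K.+3 _ K.+2) //.
change (Lams K.+3 ?X) with (Lam (Lams K.+2 X)).
apply: red_trans; first exact/red_beta.
rewrite subst_Lams addn0 subst_BODY; last by lia.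
rewrite (subst_var_eq K.+2 (church n2)) church_lift !church_subst.
set st := iter m delta i0.
have Hst : st < K by exact: iter_delta_lt.
have -> : church (if acc st then n1 else n2) = Lams 2 (iter (if acc st then n1 else n2) (App (Var 1)) (Var 0)) by [].
change (Lams K.+2 ?X) with (Lams 2 (Lams K X)).
apply: red_Lams.
have Has : size (map (aj (church n1) (church n2)) (iota 0 K)) = K by rewrite size_map size_iota.
apply: red_trans.
  apply: red_Lams.
  apply: red_trans; first exact/red_Apps/red_church.
  apply: red_trans; first exact/red_Apps/(iter_D m Hi0).
  exact: red_select Has Hst.
rewrite (nth_map 0) ?size_iota // nth_iota // add0n /aj.
have -> : (if acc st then church n1 else church n2) = church (if acc st then n1 else n2) by case: (acc st).
apply: red_trans; first exact/red_Lams/red_Apps/red_church.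
have -> : iter (if acc st then n1 else n2) (App (Var K.+1)) (Var K) =
  lift K 0 (iter (if acc st then n1 else n2) (App (Var 1)) (Var 0)).
  by rewrite lift_iter /= add1n add0n.
exact: red_eta.
Qed.

Lemma typing_P i : typing [::] (Pst i) sT.
Proof.
apply: typing_Lams; apply: isvar_typing => /=; lia.
Qed.

Lemma typing_D : typing [::] Dt (Arr sT sT).
Proof.
apply: ty_lam; apply: typing_Lams.
apply: typing_Apps_iota.
  move=> j _; apply: isvar_typing => /=; lia.
apply: ty_var'; first by rewrite size_cat size_nseq addn1.
exact: (nth_nseq_cat K _ 0).
Qed.

Lemma typing_E : typing [::] Et (arrows 3 sT).
Proof.
rewrite /Et /arrows /=.
do 5 apply: ty_lam.
apply: typing_Lams.
rewrite /BODY.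
have Hs : forall n, n < 5 -> n + K < size (nseq K O ++ [:: sT; Arr sT sT; WT; WT; WT]).
  by move=> n Hn; rewrite size_cat size_nseq /=; lia.
apply: typing_Apps_iota.
  move=> j _; rewrite /aj.
  apply: (typing_Apps (P := isvar K)); first exact: vars_all.
    move=> u; exact: isvar_typing.
  rewrite size_vars.
  apply: (ty_app (a := sT)); last first.
    apply: ty_var'; first exact: (Hs 0).
    exact: (nth_nseq_cat K _ 0).
  apply: (ty_app (a := Arr sT sT)); last first.
    apply: ty_var'; first exact: (Hs 1).
    exact: (nth_nseq_cat K _ 1).
  case: (acc j).
    apply: ty_var'; first exact: (Hs 3).
    exact: (nth_nseq_cat K _ 3).
  apply: ty_var'; first exact: (Hs 2).
  exact: (nth_nseq_cat K _ 2).
apply: (ty_app (a := sT)); last exact: (typing_weaken _ (typing_P i0)).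
apply: (ty_app (a := Arr sT sT)); last exact: (typing_weaken _ typing_D).
apply: ty_var'; first exact: (Hs 4).
exact: (nth_nseq_cat K _ 4).
Qed.
End Cons.
Ltac inj := repeat match goal with H : existT _ _ _ = existT _ _ _ |- _ => apply inj_pair2 in H end; subst.

Section Sem.
Variables (M : model) (t : ty).
Let T := Arr t t.

Definition idM : dom M (Arr t t) :=
  app (app (combS M t T t) (combK M t T)) (combK M t t).
Lemma idM_spec x : app idM x = x.
Proof. by rewrite /idM combS_spec !combK_spec. Qed.

Definition e0 : dom M (omega t) := app (combK M T T) idM.
Lemma e0_spec f x : app (app e0 f) x = x.
Proof. by rewrite /e0 combK_spec idM_spec. Qed.

Definition SS : dom M (Arr (Arr t T) (Arr T T)) := combS M t t t.
Definition Kf : dom M (Arr T (Arr t T)) := combK M T t.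
Definition XX : dom M (Arr T (Arr T T)) :=
  app (app (combS M T (Arr t T) (Arr T T)) (app (combK M (Arr (Arr t T) (Arr T T)) T) SS)) Kf.
Definition Fs (e : dom M (omega t)) : dom M (omega t) := app (app (combS M T T T) XX) e.
Lemma Fs_spec e f x : app (app (Fs e) f) x = app f (app (app e f) x).
Proof.
rewrite /Fs combS_spec /XX combS_spec combK_spec /SS combS_spec /Kf combK_spec //.
Qed.

Fixpoint gM (m : nat) : dom M (omega t) := if m is m'.+1 then Fs (gM m') else e0.
Lemma gM_spec m f x : app (app (gM m) f) x = iter m (app f) x.
Proof.
elim: m x => [|m IH] x /=; first by rewrite e0_spec.
by rewrite Fs_spec IH.
Qed.

Definition body m := iter m (App (Var 1)) (Var 0).

Lemma den_body_elim m (r : env M [:: t; Arr t t]) (d : dom M t) :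
  denotes (body m) r d -> d = iter m (app (r 1 isT)) (r 0 isT).
Proof.
elim: m d => [|m IH] d /= H.
  inversion H; inj. by rewrite (eq_irrelevance h isT).
inversion H; inj.
dependent destruction H6.
by rewrite (IH _ H7) (eq_irrelevance h isT).
Qed.

Lemma den_body_intro m (r : env M [:: t; Arr t t]) :
  denotes (body m) r (iter m (app (r 1 isT)) (r 0 isT)).
Proof.
elim: m => [|m IH] /=; first exact: (@den_var M [:: t; Arr t t] 0 isT r).
apply: den_app IH.
exact: (@den_var M [:: t; Arr t t] 1 isT r).
Qed.

Lemma interp_church m (c : dom M (omega t)) :
  interp_eq (church m) c <-> c = gM m.
Proof.
split.
  rewrite /interp_eq /church => H.
  dependent destruction H.
  apply: app_ext => f; apply: app_ext => x.
  have H1 := H f.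
  dependent destruction H1.
  have H2 := H0 x.
  by rewrite gM_spec (den_body_elim H2).
move=> ->; rewrite /interp_eq /church.
apply: den_lam => f; apply: den_lam => x.
rewrite gM_spec.
exact: (den_body_intro m (env_cons x (env_cons f (env_nil M)))).
Qed.
End Sem.

Theorem lemma2 (M : model) (tau : ty) (c : dom M (omega tau))
    (h : seq nat -> nat) :
  (forall m n1 n2 : nat,
      (interp_eq (church m) c -> h [:: m; n1; n2] = n1) /\
      (~ interp_eq (church m) c -> h [:: m; n1; n2] = n2)) ->
  strictly_definable 3 h.
Proof.
move=> Hh.
pose e := enum (dom M (omega tau)).
have ci : c \in e by rewrite mem_enum.
have Kgt0 : 0 < size e by move: ci; case: (e).
pose delta j := index (Fs (nth c e j)) e.
have delta_lt : forall j, j < size e -> delta j < size e.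
  by move=> j _; rewrite /delta index_mem mem_enum.
pose i0 := index (gM M tau 0) e.
have Hi0 : i0 < size e by rewrite /i0 index_mem mem_enum.
pose acc j := nth c e j == c.
exists (sT (size e)), (Et (size e) delta i0 acc).
split; first exact: typing_E.
move=> [|m [|n1 [|n2 [|? ?]]]] // _.
apply: red_betaeta.
have Hst : iter m delta i0 = index (gM M tau m) e.
  elim: m {Hh} => //= m ->.
  by rewrite /delta nth_index // mem_enum.
have := @red_main (size e) delta i0 acc Kgt0 delta_lt m n1 n2 Hi0.
rewrite Hst /acc nth_index ?mem_enum //.
case: eqP => [E|NE].
  rewrite (proj1 (Hh m n1 n2)) //; apply/interp_church; by rewrite E.
rewrite (proj2 (Hh m n1 n2)) // => /interp_church H; apply: NE; by rewrite H.
Qed.
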